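(* Let $(D_d)_{d\in\mathbb{N}}$ be an arbitrary sequence of open sets $D_d\subset\mathbb{R}^d$ with $\lambda_d(D_d)=1$, let $(L_d)$ be positive numbers and let \[ \overline{C}_d^0(L)=\{f|_{D_d} \mid f\colon\mathbb{R}^d\to\mathbb{R},\ \sup_{x\in\mathbb R^d}|f(x)|\le 1,\ \operatorname{Lip}(f)\le L_d\}. \] Then \[ n\bigl(\varepsilon,\overline{C}_d^0(L)\bigr)\ge (1-a\varepsilon)\Bigl(\frac{aL_d\sqrt d}{3\sqrt{2e\pi}}\Bigr)^d \] for all $a\ge1$, $\varepsilon\in(0,1/a)$ and $d\in\mathbb{N}$. Consequently, the curse of dimensionality holds for $(\overline{C}_d^0(L))_d$ if $\limsup_{d\to\infty}L_d\sqrt d>0$.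
   Context: $\operatorname{Lip}(f)=\sup_{x\ne y}|f(x)-f(y)|/\|x-y\|_2$. Integration problem: approximate $S_d(f)=\int_{D_d}f(x)\,dx$ for $f\in F_d$ by algorithms $A_{n,d}(f)=\phi_{n,d}(f(x_1),\dots,f(x_n))$ with points $x_j\in D_d$ possibly adaptively chosen and arbitrary $\phi_{n,d}\colon\mathbb R^n\to\mathbb R$. Worst-case error $e(A_{n,d})=\sup_{f\in F_d}|S_d(f)-A_{n,d}(f)|$; information complexity $n(\varepsilon,F_d)$ is the minimal $n$ such that some $A_{n,d}$ has error $\le\varepsilon$. The curse of dimensionality holds if there exist $c,\varepsilon_0,\gamma>0$ with $n(\varepsilon,F_d)\ge c(1+\gamma)^d$ for all $\varepsilon\le\varepsilon_0$ and infinitely many $d$. *)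

(* Defs.v *)
From HB Require Import structures.
From mathcomp Require Import all_boot all_order all_algebra.
From mathcomp Require Import all_classical all_reals all_analysis.
Set Implicit Arguments. Unset Strict Implicit. Unset Printing Implicit Defensive.
Import Order.TTheory GRing.Theory Num.Theory.
Local Open Scope classical_set_scope.
Local Open Scope ring_scope.

Section Defs.
Variable R : realType.

(* Points of R^d are d-tuples of reals (with the product Borel sigma-algebra). *)

Definition eucl_dist (d : nat) (x y : d.-tuple R) : R :=
  Num.sqrt (\sum_(i < d) (tnth x i - tnth y i) ^+ 2).

Definition eucl_open (d : nat) (D : set (d.-tuple R)) : Prop :=
  forall x, D x -> exists2 r : R, 0 < r & forall y, eucl_dist x y < r -> D y.

(* d-dimensional Lebesgue measure, built as the iterated product of the
   one-dimensional Lebesgue measure:  lambda_0 = Dirac mass at the empty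
   tuple,  lambda_{d+1}(A) = \int lambda_d {t | x :: t \in A} dx. *)
Fixpoint lebesgue_d (d : nat) : set (d.-tuple R) -> \bar R :=
  match d with
  | 0 => fun A => (\1_A [tuple] : R)%:E
  | d'.+1 => fun A =>
      (\int[@lebesgue_measure R]_x
          @lebesgue_d d' [set t : d'.-tuple R | A [tuple of x :: t]])%E
  end.

Definition lip_le (d : nat) (f : d.-tuple R -> R) (L : R) : Prop :=
  forall x y, `|f x - f y| <= L * eucl_dist x y.

(* The class  \bar C^0_d(L): functions f : R^d -> R with sup |f| <= 1 and
   Lip(f) <= L (they are only ever evaluated / integrated on D). *)
Definition lip_class (d : nat) (L : R) : set (d.-tuple R -> R) :=
  [set f | (forall x, `|f x| <= 1) /\ lip_le f L].

Definition S_int (d : nat) (D : set (d.-tuple R)) (f : d.-tuple R -> R)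
  : \bar R := (\int[@lebesgue_d d]_(x in D) (f x)%:E)%E.

(* Information obtained by an adaptive algorithm: the k-th node is
   pts k (f(x_1), ..., f(x_k)), a function of the previously computed values. *)
Fixpoint info (T : Type) (pts : nat -> seq R -> T) (f : T -> R) (k : nat)
  : seq R :=
  match k with
  | 0 => [::]
  | k'.+1 => let s := info pts f k' in rcons s (f (pts k' s))
  end.

Definition alg (T : Type) (n : nat) (pts : nat -> seq R -> T)
  (phi : seq R -> R) (f : T -> R) : R := phi (info pts f n).

Definition wc_error (T : Type) (F : set (T -> R)) (S : (T -> R) -> \bar R)
  (n : nat) (pts : nat -> seq R -> T) (phi : seq R -> R) : \bar R :=
  ereal_sup [set (`| S f - (alg n pts phi f)%:E |)%E | f in F].

(* Information complexity n(eps, F): the minimal n for which some algorithm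
   using n (adaptively chosen) points of D has error <= eps
   (= +oo if there is no such n). *)
Definition info_complexity (T : Type) (D : set T) (F : set (T -> R))
  (S : (T -> R) -> \bar R) (eps : R) : \bar R :=
  ereal_inf [set (n%:R)%:E | n in
    [set n : nat | exists pts : nat -> seq R -> T, exists phi : seq R -> R,
       (forall k s, D (pts k s)) /\ (wc_error F S n pts phi <= eps%:E)%E]].

End Defs.

(* Main.v *)
Require Import Defs.
From HB Require Import structures.
From mathcomp Require Import all_boot all_order all_algebra.
From mathcomp Require Import all_classical all_reals all_analysis.
From mathcomp Require Import measurable_realfun.
From mathcomp.algebra_tactics Require Import ring lra.
Set Implicit Arguments. Unset Strict Implicit. Unset Printing Implicit Defensive.
Import Order.TTheory GRing.Theory Num.Theory.
Import numFieldNormedType.Exports.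
Local Open Scope classical_set_scope.
Local Open Scope ring_scope.

Section Step.
Context (R : realType) (n : nat)
  (mu : {sigma_finite_measure set (n.-tuple R) -> \bar R}).

Definition consf (p : measurableTypeR R * n.-tuple R) : n.+1.-tuple R := [tuple of (p.1 : R) :: p.2].
Definition unconsf (t : n.+1.-tuple R) : measurableTypeR R * n.-tuple R := (thead t : measurableTypeR R, [tuple of behead t]).

Lemma mconsf : measurable_fun setT consf.
Proof. apply: measurable_cons; last exact: measurable_snd. exact: measurable_fst. Qed.

Lemma munconsf : measurable_fun setT unconsf.
Proof.
apply: measurable_fun_pair; last exact: measurable_behead.
exact: measurable_tnth.
Qed.

Lemma unconsK : cancel consf unconsf.
Proof. by case=> x t; rewrite /unconsf /consf /=; congr pair; apply: val_inj. Qed.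

Local Notation pm := (@lebesgue_measure R \x mu)%E.
Definition nextm : set (n.+1.-tuple R) -> \bar R := pushforward pm consf.

Let nextm0 : nextm set0 = 0%E.
Proof. by rewrite /nextm /pushforward preimage_set0 measure0. Qed.
Let nextm_ge0 A : (0 <= nextm A)%E.
Proof. by rewrite /nextm /pushforward; exact: measure_ge0. Qed.
Let nextm_sa : semi_sigma_additive nextm.
Proof.
move=> F mF tF mUF; rewrite /nextm /pushforward preimage_bigcup.
apply: measure_semi_sigma_additive.
- by move=> k; rewrite -[X in measurable X]setTI; exact: mconsf.
- apply/trivIsetP => /= i j _ _ ij; rewrite -preimage_setI.
  by move/trivIsetP : tF => /(_ _ _ _ _ ij) ->//; rewrite preimage_set0.
- by rewrite -preimage_bigcup -[X in measurable X]setTI; exact: mconsf.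
Qed.
HB.instance Definition _ := isMeasure.Build _ _ _ nextm nextm0 nextm_ge0 nextm_sa.

Let pm_sf : sigma_finite setT pm.
Proof.
have /sigma_finiteP[F [TF ndF Foo]] := sigma_finiteT (@lebesgue_measure R).
have /sigma_finiteP[G [TG ndG Goo]] := sigma_finiteT mu.
exists (fun k => F k `*` G k).
 rewrite -setXTT TF TG predeqE => -[x y]; split.
    move=> [/= [m _ Fnx] [k _ Gky]]; exists (maxn m k) => //; split.
    - by move: x Fnx; exact/subsetPset/ndF/leq_maxl.
    - by move: y Gky; exact/subsetPset/ndG/leq_maxr.
  by move=> [m _ []/= ? ?]; split; exists m.
move=> k; have [? ?] := Foo k; have [? ?] := Goo k.
split; first exact: measurableX.
by rewrite product_measure1E// lte_mul_pinfty// ge0_fin_numE.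
Qed.

Let nextm_sf : sigma_finite setT nextm.
Proof.
have [G GT Gm] := pm_sf.
exists (fun k => unconsf @^-1` G k).
  apply/seteqP; split => // t _.
  have : (setT : set (R * n.-tuple R)) (unconsf t) by [].
  rewrite GT => -[k _ Gk]; by exists k.
move=> k; split.
  by rewrite -[X in measurable X]setTI; apply: munconsf => //; case: (Gm k).
rewrite /nextm /pushforward.
have -> : consf @^-1` (unconsf @^-1` G k) = G k.
  by apply/seteqP; split => p /=; rewrite unconsK.
by case: (Gm k).
Qed.
HB.instance Definition _ := Measure_isSigmaFinite.Build _ _ _ nextm nextm_sf.
End Step.

Section Meas.
Context (R : realType).
Fixpoint mud (d : nat) : {sigma_finite_measure set (d.-tuple R) -> \bar R} :=
  match d with
  | 0 => [the {sigma_finite_measure set (0.-tuple R) -> \bar R} of @dirac _ _ [tuple] R]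
  | d'.+1 => [the {sigma_finite_measure set (d'.+1.-tuple R) -> \bar R} of nextm (mud d')]
  end.

Lemma mudE d : (mud d : set _ -> _) = @lebesgue_d R d.
Proof.
elim: d => [|d IH]; apply/funext => A //=.
rewrite /nextm /pushforward /product_measure1 /= IH.
apply: eq_integral => x _ /=; congr (lebesgue_d _).
by apply/seteqP; split => t; rewrite /xsection /= inE.
Qed.
End Meas.

Section Gauss.
Context (R : realType).

Lemma int_nf (m s : R) : s != 0 ->
  (\int[@lebesgue_measure R]_x (normal_fun m s x)%:E = ((normal_peak s)^-1)%:E)%E.
Proof.
move=> s0; have := integral_normal_pdf m s; rewrite normal_pdfE //.
under eq_integral do rewrite EFinM.
rewrite ge0_integralZl_EFin //; last 3 first.
- by move=> x _; rewrite lee_fin normal_fun_ge0.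
- by apply/measurable_EFinP; apply: measurable_normal_fun.
- exact: normal_peak_ge0.
have pg := normal_peak_gt0 s0.
have : (0 <= \int[@lebesgue_measure R]_x (normal_fun m s x)%:E)%E.
  by apply: integral_ge0 => x _; rewrite lee_fin normal_fun_ge0.
case: (\int[_]_x _)%E => [r _ /eqP|_|//].
- rewrite -EFinM eqe => /eqP h; congr EFin.
  move/(congr1 (fun z => (normal_peak s)^-1 * z)): h.
  by rewrite mulKf ?gt_eqF // mulr1.
- by rewrite gt0_muley ?lte_fin.
Qed.

Definition gprod d (c : nat -> R) (s : R) (t : d.-tuple R) : R :=
  \prod_(i < d) normal_fun (c i) s (tnth t i).

Lemma mgprod d c s : measurable_fun setT (@gprod d c s).
Proof.
apply: measurable_prod => i _.
apply: measurableT_comp; first exact: measurable_normal_fun.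
exact: measurable_tnth.
Qed.

Lemma gprod_ge0 d c s t : 0 <= @gprod d c s t.
Proof. by apply: prodr_ge0 => i _; exact: normal_fun_ge0. Qed.

Lemma gprod_cons d c s x (t : d.-tuple R) :
  gprod c s (consf (x, t)) = normal_fun (c 0%N) s x * gprod (fun i => c i.+1) s t.
Proof.
rewrite /gprod big_ord_recl /=; congr (_ * _).
by apply: eq_bigr => i _; rewrite /consf /= tnthS.
Qed.

Lemma int_gprod d c s : s != 0 ->
  (\int[mud R d]_t (@gprod d c s t)%:E = (((normal_peak s)^-1) ^+ d)%:E)%E.
Proof.
move=> s0; elim: d c => [|d IH] c.
  rewrite /= /gprod.
  under eq_integral do rewrite big_ord0.
  by rewrite integral_cst //= diracT mul1e expr0.
transitivity (\int[pushforward (@lebesgue_measure R \x mud R d)%E (@consf R d)]_t (gprod c s t)%:E)%E; first by [].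
rewrite (@ge0_integral_pushforward _ _ _ _ R (@consf R d) (@mconsf R d)) //; last 2 first.
- by apply/measurable_EFinP; apply: mgprod.
- by move=> y _; rewrite lee_fin gprod_ge0.
rewrite preimage_setT fubini_tonelli1 //=; last 2 first.
- apply/measurable_EFinP; apply: measurableT_comp; first exact: mgprod.
  exact: mconsf.
- by move=> p; rewrite lee_fin gprod_ge0.
rewrite /fubini_F.
under eq_integral => x _.
  under eq_integral => y _ do rewrite /= gprod_cons EFinM.
  rewrite ge0_integralZl_EFin //; last 3 first.
  - by move=> y _; rewrite lee_fin gprod_ge0.
  - by apply/measurable_EFinP; apply: mgprod.
  - exact: normal_fun_ge0.
  rewrite IH muleC.
  over.
rewrite /= ge0_integralZl_EFin //; last 3 first.
- by move=> y _; rewrite lee_fin normal_fun_ge0.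
- by apply/measurable_EFinP; apply: measurable_normal_fun.
- by rewrite exprn_ge0 // invr_ge0 normal_peak_ge0.
by rewrite int_nf // -EFinM exprS mulrC.
Qed.
End Gauss.

Section Dist.
Context (R : realType).

Lemma cs_ineq d (a b : 'I_d -> R) :
  \sum_i a i * b i <= Num.sqrt (\sum_i a i ^+ 2) * Num.sqrt (\sum_i b i ^+ 2).
Proof.
set A := \sum_i a i ^+ 2; set B := \sum_i b i ^+ 2.
have A0 : 0 <= A by apply: sumr_ge0 => i _; exact: sqr_ge0.
have B0 : 0 <= B by apply: sumr_ge0 => i _; exact: sqr_ge0.
have [Ae|Apos] := eqVneq A 0.
  have ai i : a i = 0.
    apply/eqP; rewrite -sqrf_eq0; apply/eqP.
    exact: (@psumr_eq0P _ _ xpredT (fun j => a j ^+ 2) (fun j _ => sqr_ge0 (a j)) Ae i isT).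
  by rewrite big1 ?Ae ?sqrtr0 ?mul0r // => i _; rewrite ai mul0r.
have [Be|Bpos] := eqVneq B 0.
  have bi i : b i = 0.
    apply/eqP; rewrite -sqrf_eq0; apply/eqP.
    exact: (@psumr_eq0P _ _ xpredT (fun j => b j ^+ 2) (fun j _ => sqr_ge0 (b j)) Be i isT).
  by rewrite big1 ?Be ?sqrtr0 ?mulr0 // => i _; rewrite bi mulr0.
set al := Num.sqrt A; set be := Num.sqrt B.
have alp : 0 < al by rewrite sqrtr_gt0 lt0r Apos.
have bep : 0 < be by rewrite sqrtr_gt0 lt0r Bpos.
have al2 : al ^+ 2 = A by rewrite sqr_sqrtr.
have be2 : be ^+ 2 = B by rewrite sqr_sqrtr.
have key : 2 * al * be * \sum_i a i * b i <= be ^+ 2 * A + al ^+ 2 * B.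
  rewrite /A /B !mulr_sumr -big_split /=; apply: ler_sum => i _.
  have := sqr_ge0 (be * a i - al * b i); nra.
have : 2 * al * be * \sum_i a i * b i <= 2 * al * be * (al * be).
  by rewrite (le_trans key) // -al2 -be2; nra.
rewrite ler_pM2l //; by rewrite !mulr_gt0.
Qed.

Lemma eucl_ge0 d (x y : d.-tuple R) : 0 <= eucl_dist x y.
Proof. exact: sqrtr_ge0. Qed.

Lemma eucl_xx d (x : d.-tuple R) : eucl_dist x x = 0.
Proof. by rewrite /eucl_dist big1 ?sqrtr0 // => i _; rewrite subrr expr0n. Qed.

Lemma euclC d (x y : d.-tuple R) : eucl_dist x y = eucl_dist y x.
Proof. by rewrite /eucl_dist; congr Num.sqrt; apply: eq_bigr => i _; rewrite -sqrrN opprB. Qed.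

Lemma eucl_tri d (x y z : d.-tuple R) : eucl_dist x z <= eucl_dist x y + eucl_dist y z.
Proof.
rewrite /eucl_dist.
set a := fun i => tnth x i - tnth y i; set b := fun i => tnth y i - tnth z i.
have -> : \sum_i (tnth x i - tnth z i) ^+ 2 = \sum_i (a i + b i) ^+ 2.
  by apply: eq_bigr => i _; rewrite /a /b; congr (_ ^+ 2); ring.
have -> : \sum_i (tnth x i - tnth y i) ^+ 2 = \sum_i a i ^+ 2 by [].
have -> : \sum_i (tnth y i - tnth z i) ^+ 2 = \sum_i b i ^+ 2 by [].
have A0 : 0 <= \sum_i a i ^+ 2 by apply: sumr_ge0 => i _; exact: sqr_ge0.
have B0 : 0 <= \sum_i b i ^+ 2 by apply: sumr_ge0 => i _; exact: sqr_ge0.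
rewrite -[X in _ <= X]ger0_norm ?addr_ge0 // -sqrtr_sqr ler_sqrt ?sqr_ge0 //.
have -> : \sum_i (a i + b i) ^+ 2 = \sum_i a i ^+ 2 + 2 * \sum_i a i * b i + \sum_i b i ^+ 2.
  rewrite mulr_sumr -!big_split /=; apply: eq_bigr => i _; ring.
have := cs_ineq a b.
rewrite sqrrD !sqr_sqrtr //; lra.
Qed.
End Dist.

Section Open.
Context (R : realType) (d : nat).

Definition box (k : d.-tuple int) (m : nat) : set (d.-tuple R) :=
  \bigcap_(i in [set: 'I_d])
     ((@tnth d R)^~ i @^-1` `[(tnth k i)%:~R / m.+1%:R, (tnth k i + 1)%:~R / m.+1%:R[).

Lemma box_meas k m : measurable (box k m).
Proof.
apply: fin_bigcap_measurable; first exact: finite_finset.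
move=> i _; rewrite -[X in measurable X]setTI.
by apply: measurable_tnth => //; exact: measurable_itv.
Qed.

Lemma open_meas (D : set (d.-tuple R)) : eucl_open D -> measurable D.
Proof.
move=> Dop.
pose F := fun p : d.-tuple int * nat =>
  if `[< box p.1 p.2 `<=` D >] then box p.1 p.2 else set0.
have -> : D = \bigcup_p F p.
  apply/seteqP; split; last first.
    move=> x [p _]; rewrite /F; case: ifPn => [/asboolP sub|_ //]; exact: sub.
  move=> x Dx; have [r r0 rD] := Dop x Dx.
  pose m := Num.bound (d%:R / r ^+ 2).
  have hm : d%:R / r ^+ 2 < m.+1%:R.
    apply: (lt_le_trans (archi_boundP _)); last by rewrite ler_nat.
    by rewrite divr_ge0 // sqr_ge0.
  set h := (m.+1%:R : R)^-1.
  have h0 : 0 < h by rewrite invr_gt0 ltr0n.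
  have h1 : h <= 1 by rewrite invf_le1 ?ltr0n // ler1n.
  have hr : d%:R * h < r ^+ 2.
    have r2 : 0 < r ^+ 2 by rewrite exprn_gt0.
    move: hm; rewrite ltr_pdivrMr // => hm.
    by rewrite /h ltr_pdivrMr ?ltr0n // mulrC.
  pose k := [tuple Num.floor (tnth x i * m.+1%:R) | i < d].
  have xb : box k m x.
    move=> i _; rewrite /= tnth_mktuple in_itv /=; apply/andP; split.
      by rewrite ler_pdivrMr ?ltr0n // floor_le.
    by rewrite ltr_pdivlMr ?ltr0n // floorD1_gt.
  have sub : box k m `<=` D.
    move=> y yb; apply: rD.
    have bnd i : (tnth x i - tnth y i) ^+ 2 <= h ^+ 2.
      have := xb i I; have := yb i I; rewrite /= !in_itv /= => /andP[a1 a2] /andP[b1 b2].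
      have e (z : int) : (z + 1)%:~R / m.+1%:R = z%:~R / m.+1%:R + h :> R.
        by rewrite intrD mulrDl mul1r.
      rewrite e in a2; rewrite e in b2.
      rewrite -ler_sqrt ?sqr_ge0 // !sqrtr_sqr (ger0_norm (ltW h0)).
      set u := (tnth k i)%:~R / m.+1%:R in a1 a2 b1 b2; clearbody u h.
      rewrite ler_norml; apply/andP; split; lra.
    rewrite /eucl_dist -(ger0_norm (ltW r0)) -sqrtr_sqr ltr_sqrt ?exprn_gt0 //.
    apply: (le_lt_trans _ hr).
    apply: (le_trans (ler_sum _ (fun i _ => bnd i))).
    rewrite sumr_const card_ord -[h ^+ 2 *+ d]mulr_natl; apply: ler_wpM2l => //.
    by rewrite expr2 ler_piMr // ltW.
  by exists (k, m) => //; rewrite /F /= asboolT.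
apply: countable_bigcupT_measurable; first exact: countableP.
move=> p; rewrite /F; case: ifP => _; [exact: box_meas | exact: measurable0].
Qed.
End Open.

Lemma min_lip (R : realType) (a b a' b' c : R) :
  `|a - a'| <= c -> `|b - b'| <= c -> `|Num.min a b - Num.min a' b'| <= c.
Proof.
rewrite !ler_norml => /andP[h1 h2] /andP[h3 h4].
rewrite !minEle; case: ifP => hab; case: ifP => hab'; apply/andP; split; lra.
Qed.

Section Fool.
Context (R : realType) (d : nat) (L t : R) (z : nat -> d.-tuple R).
Hypothesis L0 : 0 <= L.
Hypothesis t0 : 0 <= t.

Fixpoint fmin (k : nat) (x : d.-tuple R) : R :=
  match k with
  | 0 => t
  | k'.+1 => Num.min (fmin k' x) (L * eucl_dist x (z k'))
  end.

Lemma fmin_ge0 k x : 0 <= fmin k x.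
Proof.
elim: k => [//|k IH] /=; rewrite le_min IH /=.
by rewrite mulr_ge0 // eucl_ge0.
Qed.

Lemma fmin_le k x : fmin k x <= t.
Proof. by elim: k => [//|k IH] /=; rewrite ge_min IH. Qed.

Lemma fmin_node k j : (j < k)%N -> fmin k (z j) = 0.
Proof.
elim: k => [//|k IH]; rewrite ltnS leq_eqVlt => /orP[/eqP->|jk] /=.
  rewrite eucl_xx mulr0; apply/le_anti; rewrite ge_min lexx orbT /=.
  by rewrite le_min fmin_ge0 lexx.
rewrite IH //; apply/le_anti; rewrite ge_min lexx /= le_min lexx /=.
by rewrite mulr_ge0 // eucl_ge0.
Qed.

Lemma fmin_lip k x y : `|fmin k x - fmin k y| <= L * eucl_dist x y.
Proof.
elim: k => [|k IH] /=; first by rewrite subrr normr0 mulr_ge0 // eucl_ge0.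
apply: min_lip => //; rewrite -mulrBr normrM ger0_norm //.
apply: ler_wpM2l => //; rewrite ler_norml; apply/andP; split.
  have := eucl_tri y x (z k); rewrite (euclC y x); lra.
have := eucl_tri x y (z k); lra.
Qed.

Lemma measurable_edist (c : d.-tuple R) : measurable_fun setT (fun x : d.-tuple R => eucl_dist x c).
Proof.
apply: measurableT_comp; first exact: continuous_measurable_fun (@sqrt_continuous R).
apply: measurable_sum => i.
apply: measurable_funX; apply: measurable_funB => //.
exact: measurable_tnth.
Qed.

Lemma measurable_fmin k : measurable_fun setT (fmin k).
Proof.
elim: k => [|k IH] /=; first exact: measurable_cst.
apply: (measurable_minr IH).
apply: measurable_funM => //; exact: measurable_edist.
Qed.

Variable s : R.
Hypothesis s0 : s != 0.
Variable r : R.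
Hypothesis tLr : t <= L * r.

Definition GK j (x : d.-tuple R) : R :=
  expR (r ^+ 2 / (s ^+ 2 *+ 2)) * gprod (fun i => nth 0 (z j) i) s x.

Lemma GK_ge0 j x : 0 <= GK j x.
Proof. by rewrite mulr_ge0 ?expR_ge0 ?gprod_ge0. Qed.

Lemma measurable_GK j : measurable_fun setT (GK j).
Proof. by apply: measurable_funM => //; exact: mgprod. Qed.

Lemma GKE j x : GK j x = expR ((r ^+ 2 - eucl_dist x (z j) ^+ 2) / (s ^+ 2 *+ 2)).
Proof.
rewrite /GK /gprod /normal_fun -expR_sum -expRD /eucl_dist sqr_sqrtr; last first.
  by apply: sumr_ge0 => i _; exact: sqr_ge0.
congr expR; rewrite mulrBl; congr (_ + _).
rewrite -mulNr -sumrN mulr_suml; apply: eq_bigr => i _.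
by rewrite [tnth (z j) i](tnth_nth 0).
Qed.

Lemma GK_ge1 j x : eucl_dist x (z j) < r -> 1 <= GK j x.
Proof.
move=> h; rewrite GKE -expR0 ler_expR divr_ge0 //; last first.
  by rewrite mulrn_wge0 // sqr_ge0.
rewrite subr_ge0 -ler_sqrt ?sqr_ge0 // !sqrtr_sqr.
rewrite (ger0_norm (eucl_ge0 _ _)); apply: (le_trans (ltW h)).
exact: ler_norm.
Qed.

Lemma fmin_lb k x : t <= fmin k x + t * \sum_(j < k) GK j x.
Proof.
elim: k => [|k IH] /=.
  by rewrite big_ord0 mulr0 addr0.
rewrite big_ord_recr /= mulrDr.
have G0 := GK_ge0 k x.
have S0 : 0 <= \sum_(j < k) GK j x by apply: sumr_ge0 => j _; exact: GK_ge0.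
rewrite minEle; case: ifP => _.
  have : 0 <= t * GK k x by rewrite mulr_ge0.
  lra.
have [hd|hd] := ltP (eucl_dist x (z k)) r.
  have := GK_ge1 hd => h1.
  have : t <= t * GK k x by rewrite -{1}(mulr1 t) ler_wpM2l.
  have : 0 <= t * \sum_(j < k) GK j x by rewrite mulr_ge0.
  have : 0 <= L * eucl_dist x (z k) by rewrite mulr_ge0 ?eucl_ge0.
  lra.
have : t <= L * eucl_dist x (z k) by apply: (le_trans tLr); rewrite ler_wpM2l.
have : 0 <= t * \sum_(j < k) GK j x by rewrite mulr_ge0.
have : 0 <= t * GK k x by rewrite mulr_ge0.
lra.
Qed.

End Fool.

Section LB.
Context (R : realType) (d : nat) (D : set (d.-tuple R)) (mD : measurable D)
  (vol : mud R d D = 1%E) (L t : R) (z : nat -> d.-tuple R) (n : nat) (s r : R).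
Hypotheses (L0 : 0 <= L) (t0 : 0 <= t) (s0 : s != 0) (tLr : t <= L * r).

Local Notation V := (expR (r ^+ 2 / (s ^+ 2 *+ 2)) * (normal_peak s)^-1 ^+ d).

Lemma int_GK j : (\int[mud R d]_x (GK z s r j x)%:E = V%:E)%E.
Proof.
rewrite /GK; under eq_integral do rewrite EFinM.
rewrite ge0_integralZl_EFin //.
- by rewrite int_gprod // -EFinM.
- by move=> x _; rewrite lee_fin gprod_ge0.
- by apply/measurable_EFinP; apply: mgprod.
Qed.

Lemma Sf_lb : (t%:E <= \int[mud R d]_(x in D) (fmin L t z n x)%:E + (t * n%:R * V)%:E)%E.
Proof.
have mf : measurable_fun D (fun x => (fmin L t z n x)%:E).
  by apply/measurable_EFinP; apply: measurable_funTS; apply: measurable_fmin.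
have mG : measurable_fun setT (fun x => (t * \sum_(j < n) GK z s r j x)%:E).
  apply/measurable_EFinP; apply: measurable_funM => //.
  by apply: measurable_sum => j; apply: measurable_GK.
have G0 x : (0 <= (t * \sum_(j < n) GK z s r j x)%:E)%E.
  by rewrite lee_fin mulr_ge0 // sumr_ge0 // => j _; exact: GK_ge0.
have e1 : (t%:E = \int[mud R d]_(x in D) (cst t%:E x))%E.
  rewrite integral_cst //; by move: vol => /= ->; rewrite mule1.
rewrite e1.
apply: (@le_trans _ _ (\int[mud R d]_(x in D) ((fmin L t z n x)%:E + (t * \sum_(j < n) GK z s r j x)%:E))%E).
  apply: ge0_le_integral => //.
  - by apply: emeasurable_funD => //; apply: measurable_funTS.
  - by move=> x _; rewrite -EFinD lee_fin; apply: fmin_lb.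
rewrite ge0_integralD //; try (by move=> x _; rewrite lee_fin fmin_ge0);
  try (by move=> x _; apply: G0); try (exact: measurable_funTS).
apply: leeD2l.
apply: (@le_trans _ _ (\int[mud R d]_x (t * \sum_(j < n) GK z s r j x)%:E))%E.
  apply: ge0_subset_integral => //; by move=> x _; apply: G0.
under eq_integral do rewrite EFinM -sumEFin.
rewrite ge0_integralZl_EFin //; try (by move=> x _; rewrite sume_ge0 // => j _; rewrite lee_fin GK_ge0);
  try (by apply: emeasurable_sum => // j; apply/measurable_EFinP; exact: measurable_GK).
rewrite ge0_integral_sum //; try (by move=> j; apply/measurable_EFinP; exact: measurable_GK);
  try (by move=> j x _; rewrite lee_fin GK_ge0).
under eq_bigr do rewrite int_GK.
rewrite sumEFin sumr_const card_ord -EFinM lee_fin.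
suff -> : t * n%:R * V = t * (V *+ n) by [].
by rewrite -mulrA mulr_natl.
Qed.
End LB.

Lemma VK_le1 (R : realType) (a L : R) (d : nat) : 1 <= a -> 0 < L -> (0 < d)%N ->
  expR ((a^-1 / L) ^+ 2 / (((a^-1 / L) / Num.sqrt d%:R) ^+ 2 *+ 2)) *
  (normal_peak ((a^-1 / L) / Num.sqrt d%:R))^-1 ^+ d *
  (a * L * Num.sqrt d%:R / (3 * Num.sqrt (2 * expR 1 * pi))) ^+ d <= 1.
Proof.
move=> a1 L0 d0.
have a0 : 0 < a by apply: (lt_le_trans ltr01 a1).
set r := a^-1 / L.
have r0 : 0 < r by rewrite divr_gt0 // invr_gt0.
have rE : r = a^-1 / L by [].
clearbody r.
have sd0 : 0 < Num.sqrt d%:R :> R by rewrite sqrtr_gt0 ltr0n.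
set s := r / Num.sqrt d%:R.
have s0 : 0 < s by rewrite divr_gt0.
have sE : s = r / Num.sqrt d%:R by [].
clearbody s.
set K := a * L * Num.sqrt d%:R / (3 * Num.sqrt (2 * expR 1 * pi)).
have ep : 0 < 2 * expR 1 * pi :> R by rewrite !mulr_gt0 ?expR_gt0 ?pi_gt0.
have K0 : 0 <= K by rewrite divr_ge0 // ?mulr_ge0 // ltW.
have sd2 : Num.sqrt d%:R ^+ 2 = d%:R :> R by rewrite sqr_sqrtr.
have e1 : r ^+ 2 / (s ^+ 2 *+ 2) = d%:R * 2^-1.
  rewrite sE expr_div_n sd2; field.
  by rewrite pnatr_eq0 -lt0n d0 /= gt_eqF.
rewrite e1 expRM_natl.
set w := expR 2^-1 * (normal_peak s)^-1 * K.
have -> : expR 2^-1 ^+ d * (normal_peak s)^-1 ^+ d * K ^+ d = w ^+ d.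
  by rewrite /w !exprMn.
have w0 : 0 <= w.
  rewrite /w mulr_ge0 // mulr_ge0 ?expR_ge0 //; apply/ltW.
  have := @normal_peak_gt0 R s; rewrite gt_eqF // => /(_ isT) h.
  first [ exact: ((invr_gt0 _).2 h) | by rewrite (invr_gt0 (normal_peak s)) | exact: (@invr_gt0 R (normal_peak s)).2 h ].

suff w1 : w <= 1 by rewrite exprn_ile1.
suff : w ^+ 2 <= 1.
  apply: contraLR; rewrite -!ltNge => w1.
  by rewrite (lt_le_trans w1) // -[X in X <= _]expr1 ler_eXn2l // (le_trans ler01 (ltW w1)).
have -> : w ^+ 2 = 9^-1.
  rewrite /w !exprMn /normal_peak invrK sqr_sqrtr; last first.
    by rewrite mulrn_wge0 // mulr_ge0 ?sqr_ge0 // pi_ge0.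
  have -> : expR 2^-1 ^+ 2 = expR 1 :> R.
    by rewrite -expRM_natl; congr expR; field.
  rewrite sd2 exprVn exprMn sqr_sqrtr; last exact: ltW.
  rewrite sE expr_div_n sd2 rE.
  have e0 : expR 1 != 0 :> R by rewrite gt_eqF // expR_gt0.
  have p0 : pi != 0 :> R by rewrite gt_eqF // pi_gt0.
  move: p0 e0; generalize (pi : R) (expR 1 : R) => p e p0 e0.
  field.
  rewrite p0 e0 /= pnatr_eq0 -lt0n d0 /=.
  by rewrite !gt_eqF.
by rewrite invf_le1 // ler1n.
Qed.

Lemma info_eq (R : realType) (T : Type) (pts : nat -> seq R -> T) (f : T -> R) k :
  (forall j, (j < k)%N -> f (pts j (info pts (fun _ => 0) j)) = 0) ->
  info pts f k = info pts (fun _ => 0) k.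
Proof.
elim: k => [//|k IH] h /=.
rewrite IH; last by move=> j jk; apply: h; exact: ltnW.
by rewrite h.
Qed.

Lemma part1 (R : realType)
  (D : forall d : nat, set (d.-tuple R)) (L : nat -> R)
  (hDopen : forall d, (0 < d)%N -> eucl_open (D d))
  (hDvol : forall d, (0 < d)%N -> lebesgue_d (D d) = 1%E)
  (hL : forall d, (0 < d)%N -> 0 < L d) :
  (forall (a eps : R) (d : nat), 1 <= a -> 0 < eps -> eps < a^-1 -> (0 < d)%N ->
     (((1 - a * eps) *
        (a * L d * Num.sqrt d%:R
          / (3 * Num.sqrt (2 * expR 1 * pi))) ^+ d)%:E
      <= info_complexity (D d) (@lip_class R d (L d)) (S_int (D d)) eps)%E).
Proof.
move=> a eps d a1 e0 ea d0.
apply: le_ereal_inf_tmp => _ [n [pts [phi [_ herr]]] <-].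
rewrite lee_fin leNgt; apply/negP => hn.
have a0 : 0 < a by apply: (lt_le_trans ltr01 a1).
have L0 := hL d d0.
pose t := a^-1.
have t0 : 0 < t by rewrite invr_gt0.
have t1 : t <= 1 by rewrite invf_le1.
pose r := t / L d.
have tLr : t <= L d * r by rewrite /r mulrC divfK ?gt_eqF.
have sd0 : 0 < Num.sqrt d%:R :> R by rewrite sqrtr_gt0 ltr0n.
pose s := r / Num.sqrt d%:R.
have s0 : s != 0 by rewrite gt_eqF // divr_gt0 // divr_gt0.
pose z := fun k => pts k (info pts (fun _ => 0) k).
pose f := fmin (L d) t z n.
have mD : measurable (D d) by apply: open_meas; exact: hDopen.
have vol : mud R d (D d) = 1%E by rewrite mudE; exact: hDvol.
have fF : lip_class (L d) f.
  rewrite /lip_class /=; split; last by move=> x y; apply: fmin_lip; exact: ltW.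
  move=> x; rewrite ger0_norm ?fmin_ge0 ?(ltW L0) ?(ltW t0) //.
  by apply: (le_trans _ t1); apply: fmin_le.
have fnF : lip_class (L d) (fun x => - f x).
  rewrite /lip_class /=; split; last by move=> x y; rewrite -opprD normrN; apply: fmin_lip; exact: ltW.
  by move=> x; rewrite normrN; case: fF => + _; apply.
have node j : (j < n)%N -> f (pts j (info pts (fun _ => 0) j)) = 0.
  by move=> jn; apply: (@fmin_node R d (L d) t z); rewrite ?ltW.
have inf1 : info pts f n = info pts (fun _ => 0) n by apply: info_eq.
have inf2 : info pts (fun x => - f x) n = info pts (fun _ => 0) n.
  by apply: info_eq => j jn; rewrite node // oppr0.
pose A := phi (info pts (fun _ => 0) n).
have E1 : (`|S_int (D d) f - A%:E| <= eps%:E)%E.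
  apply: le_trans herr; apply: ereal_sup_ubound; exists f => //.
  by rewrite /alg inf1.
have E2 : (`|S_int (D d) (fun x => (- f x)%R) - A%:E| <= eps%:E)%E.
  apply: le_trans herr; apply: ereal_sup_ubound; exists (fun x => - f x) => //.
  by rewrite /alg inf2.
have SN : S_int (D d) (fun x => (- f x)%R) = (- S_int (D d) f)%E.
  rewrite /S_int -(mudE R d).
  under eq_integral do rewrite EFinN.
  rewrite integralN //; apply: fin_num_adde_defl.
  have i0 : (\int[mud R d]_(x in D d) ((fun x => (f x)%:E)^\- x) = 0)%E.
    apply: integral0_eq => x _.
    by rewrite (@ge0_funenegE _ _ setT) ?inE // => y _; rewrite lee_fin fmin_ge0 ?(ltW L0) ?(ltW t0).
  by rewrite i0 oppe0.
have LB := @Sf_lb R d (D d) mD vol (L d) t z n s r (ltW L0) (ltW t0) s0 tLr.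
rewrite SN in E2.
move: E1 E2 LB; rewrite /S_int -(mudE R d) -/f.
case: (\int[mud R d]_(x in D d) (f x)%:E)%E => [sf| |]; last 2 first.
- by [].
- by [].
rewrite -EFinN -!EFinB /= !lee_fin => E1 E2 LB.
set V := expR (r ^+ 2 / (s ^+ 2 *+ 2)) * (normal_peak s)^-1 ^+ d in LB.
set Kd := (a * L d * Num.sqrt d%:R / (3 * Num.sqrt (2 * expR 1 * pi))) ^+ d in hn.
have V0 : 0 < V.
  rewrite /V mulr_gt0 ?expR_gt0 // exprn_gt0 //.
  have h := @normal_peak_gt0 R s s0.
  first [ exact: ((invr_gt0 _).2 h) | by rewrite (invr_gt0 (normal_peak s)) | exact: (@invr_gt0 R (normal_peak s)).2 h | by rewrite invr_gt0 ].

have vk : V * Kd <= 1 by exact: VK_le1.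
have aeps : 0 < 1 - a * eps.
  by rewrite subr_gt0 -ltr_pdivlMl // mulrC mul1r.
have h1 : n%:R * V < (1 - a * eps) * Kd * V by rewrite ltr_pM2r.
have h2 : (1 - a * eps) * Kd * V <= 1 - a * eps.
  by rewrite -mulrA; apply: ler_piMr; [exact: ltW | rewrite mulrC].
have h3 : t * (n%:R * V) < t * (1 - a * eps).
  by rewrite ltr_pM2l //; apply: (lt_le_trans h1 h2).
have tae : t * (1 - a * eps) = t - eps.
  by rewrite mulrBr mulr1 mulrA mulVf ?gt_eqF // mul1r.
rewrite tae in h3.
have hs : sf <= eps.
  move: E1 E2; rewrite !ler_norml => /andP[_ a2] /andP[b1 _]; lra.
have := mulrA t n%:R V.
lra.
Qed.

Lemma limsup_pos (R : realType) (u : nat -> R) :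
  (0 < limn_esup (fun d => (u d)%:E))%E ->
  exists2 c : R, 0 < c & forall N, exists2 d, (N <= d)%N & c < u d.
Proof.
move=> hlim.
have [c c0 cl] : exists2 c : R, 0 < c & (c%:E < limn_esup (fun d => (u d)%:E))%E.
  move: hlim; case: (limn_esup _) => [x| |] //.
    rewrite lte_fin => x0; exists (x / 2); first by rewrite divr_gt0.
    by rewrite lte_fin ltr_pdivrMr // ltr_pMr // ltr1n.
  by move=> _; exists 1 => //; rewrite ltry.
exists c => // N.
have lb : (limn_esup (fun d => (u d)%:E) <= esups (fun d => (u d)%:E) N)%E.
  rewrite limn_esup_lim (cvg_lim _ (@cvg_esups_inf R (fun d => (u d)%:E))) //.
  by apply: ereal_inf_lbound; exists N.
have := lt_le_trans cl lb; rewrite /esups /= => /ereal_sup_gt [_ [k kN <-]].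
by rewrite lte_fin => ck; exists k.
Qed.

Unset Implicit Arguments.
Theorem proposition3p2 (R : realType)
  (D : forall d : nat, set (d.-tuple R)) (L : nat -> R)
  (hDopen : forall d, (0 < d)%N -> eucl_open (D d))
  (hDvol : forall d, (0 < d)%N -> lebesgue_d (D d) = 1%E)
  (hL : forall d, (0 < d)%N -> 0 < L d) :
  (forall (a eps : R) (d : nat), 1 <= a -> 0 < eps -> eps < a^-1 -> (0 < d)%N ->
     (((1 - a * eps) *
        (a * L d * Num.sqrt d%:R
          / (3 * Num.sqrt (2 * expR 1 * pi))) ^+ d)%:E
      <= info_complexity (D d) (@lip_class R d (L d)) (S_int (D d)) eps)%E)
  /\
  ((0 < limn_esup (fun d => (L d * Num.sqrt d%:R)%:E))%E ->
    exists c eps0 gamma : R, [/\ 0 < c, 0 < eps0 & 0 < gamma] /\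
      forall N : nat, exists2 d : nat, (N <= d)%N & (0 < d)%N /\
        forall eps : R, 0 < eps -> eps <= eps0 ->
          ((c * (1 + gamma) ^+ d)%:E
           <= info_complexity (D d) (@lip_class R d (L d)) (S_int (D d)) eps)%E).
Proof.
have P1 := part1 hDopen hDvol hL.
split => // hlim.
have [c c0 hc] := limsup_pos hlim.
set q := Num.sqrt (2 * expR 1 * pi) : R.
have q0 : 0 < q by rewrite sqrtr_gt0 !mulr_gt0 ?expR_gt0 ?pi_gt0.
set a := 1 + 6 * q / c.
have a1 : 1 <= a by rewrite lerDl divr_ge0 // ?mulr_ge0 // ltW.
have a0 : 0 < a by apply: (lt_le_trans ltr01 a1).
exists (2^-1), ((2 * a)^-1), 1; split.
  by split => //; rewrite invr_gt0 // mulr_gt0.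
move=> N; have [d dN hd] := hc (maxn N 1).
exists d; first by apply: leq_trans dN; rewrite leq_maxl.
have d0 : (0 < d)%N by apply: leq_trans dN; rewrite leq_maxr.
split => // eps e0 ee.
have ea : eps < a^-1.
  apply: (le_lt_trans ee); rewrite ltf_pV2 ?posrE ?mulr_gt0 //.
  by rewrite ltr_pMl // ltr1n.
apply: le_trans (P1 a eps d a1 e0 ea d0); rewrite lee_fin.
have h1 : 2^-1 <= 1 - a * eps.
  have : a * eps <= 2^-1.
    move: ee; rewrite -(ler_pM2l a0) => /le_trans; apply.
    have -> : a * (2 * a)^-1 = 2^-1 by field; rewrite gt_eqF.
    done.
  lra.
have h2 : 2 <= a * L d * Num.sqrt d%:R / (3 * q).
  rewrite ler_pdivlMr ?mulr_gt0 // -mulrA.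
  have hc1 : c <= L d * Num.sqrt d%:R by exact: ltW.
  have : 6 * q <= a * c.
    rewrite /a; have -> : (1 + 6 * q / c) * c = c + 6 * q by field; rewrite gt_eqF.
    lra.
  move=> h; apply: (le_trans _ (ler_wpM2l (ltW a0) hc1)); lra.
apply: ler_pM; rewrite ?exprn_ge0 ?invr_ge0 //.
have K2 : 1 + 1 <= a * L d * Num.sqrt d%:R / (3 * q) by lra.
apply: lerXn2r => //; rewrite nnegrE; [lra | apply: le_trans K2; lra].
Qed.
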